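(* If $s$ is a normalized fully ternary string of length $n$ which is bad (in the sense defined in the context), then $d_{\rm g}(s)=n-2$.
   Context: Strings are finite words over $\{0,1,2,\dots\}$. A string is \emph{normalized} if no two adjacent symbols are equal; the \emph{normalization} of a string replaces every maximal run of identical symbols by a single copy. A string is \emph{fully $k$-ary} if the set of symbols occurring in it is exactly $\{0,\dots,k-1\}$; fully ternary means fully $3$-ary. For a normalized string $s=s_1\cdots s_n$ and $1\le i\le n$, the flip $f^{(i)}(s)$ is the normalization of $s_i\cdots s_1 s_{i+1}\cdots s_n$. The grouping distance $d_{\rm g}(s)$ of a normalized fully $k$-ary string is the minimum number of flips needed to transform $s$ into a string of length $k$. Regular-expression notation: $w^i$ is $i$ repetitions of $w$, $w^*$ is zero or more, $w^+$ one or more, $w^{\ge 2}$ two or more repetitions; $\{a,b\}$ denotes a single symbol that is either $a$ or $b$ (chosen independently at each occurrence). A normalized fully ternary string is \emph{bad} (for grouping) if, after some relabelling (bijection) of the symbols $\{0,1,2\}$, it is of one of the following types: (I) $0(12)^{\ge 2}$ or $02(12)^+$; (II) $(\{0,1\}2)^+$ or $(2\{0,1\})^+2$; (III) $0(21)^+02(12)^*$; (IV) one of the eight strings $210212$, $021012$, $0120212$, $1201212$, $02101212$, $20210212$, $020210212$, $120120212$. All other normalized fully ternary strings are \emph{good}. *)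

(* Defs.v *)
From mathcomp Require Import all_boot.
Set Implicit Arguments. Unset Strict Implicit. Unset Printing Implicit Defensive.

Definition normalized (s : seq nat) : bool := sorted (fun x y => x != y) s.

Fixpoint normalize (s : seq nat) : seq nat :=
  match s with
  | [::] => [::]
  | x :: t =>
      let t' := normalize t in
      match t' with
      | y :: _ => if x == y then t' else x :: t'
      | [::] => [:: x]
      end
  end.

Definition fully (k : nat) (s : seq nat) : Prop := forall x, (x \in s) = (x < k).

Definition flip (i : nat) (s : seq nat) : seq nat :=
  normalize (rev (take i s) ++ drop i s).

Fixpoint reach (m : nat) (s t : seq nat) : Prop :=
  match m with
  | 0 => s = t
  | m'.+1 => exists i, 1 <= i <= size s /\ reach m' (flip i s) t
  end.

Definition grouping_distance (k : nat) (s : seq nat) (d : nat) : Prop :=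
  (exists t, reach d s t /\ size t = k) /\
  (forall m t, reach m s t -> size t = k -> d <= m).

Definition rep (w : seq nat) (m : nat) : seq nat := flatten (nseq m w).

Definition badI (t : seq nat) : Prop :=
  (exists m, 2 <= m /\ t = 0 :: rep [:: 1; 2] m) \/
  (exists m, 1 <= m /\ t = [:: 0; 2] ++ rep [:: 1; 2] m).

Definition badII (t : seq nat) : Prop :=
  (exists u : seq nat, u != [::] /\ all (fun x => x < 2) u /\
     t = flatten (map (fun x => [:: x; 2]) u)) \/
  (exists u : seq nat, u != [::] /\ all (fun x => x < 2) u /\
     t = flatten (map (fun x => [:: 2; x]) u) ++ [:: 2]).

Definition badIII (t : seq nat) : Prop :=
  exists m p, 1 <= m /\ t = 0 :: rep [:: 2; 1] m ++ [:: 0; 2] ++ rep [:: 1; 2] p.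

Definition badIV (t : seq nat) : Prop :=
  t \in [:: [:: 2;1;0;2;1;2]; [:: 0;2;1;0;1;2]; [:: 0;1;2;0;2;1;2];
            [:: 1;2;0;1;2;1;2]; [:: 0;2;1;0;1;2;1;2]; [:: 2;0;2;1;0;2;1;2];
            [:: 0;2;0;2;1;0;2;1;2]; [:: 1;2;0;1;2;0;2;1;2]].

(* s is bad: after relabelling by a bijection of {0,1,2}
   (0 |-> a, 1 |-> b, 2 |-> c), it is of type I-IV *)
Definition bad (s : seq nat) : Prop :=
  exists a b c t, perm_eq [:: a; b; c] [:: 0; 1; 2] /\
    (badI t \/ badII t \/ badIII t \/ badIV t) /\
    s = map (fun x => nth 0 [:: a; b; c] x) t.

(* Main.v *)
Require Import Defs.
From mathcomp Require Import all_boot zify.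
Set Implicit Arguments. Unset Strict Implicit. Unset Printing Implicit Defensive.


Lemma nz_cons2 x y l : normalized [:: x, y & l] = (x != y) && normalized (y :: l).
Proof. by []. Qed.

Lemma nz_cat l1 x l2 :
  normalized (l1 ++ x :: l2) = normalized (rcons l1 x) && normalized (x :: l2).
Proof.
elim: l1 => [|y [|z l1] IH] //=.
  by rewrite andbT.
move: IH; rewrite /normalized /= => ->. by rewrite andbA.
Qed.



Lemma nz_rev l : normalized (rev l) = normalized l.
Proof.
rewrite /normalized rev_sorted.
by apply/idP/idP; apply: sub_sorted => x y /=; rewrite eq_sym.
Qed.

Lemma nz_behead l : normalized l -> normalized (behead l).
Proof. by case: l => [|x [|y l]] //= /andP[]. Qed.

Lemma nz_catl l1 l2 : normalized (l1 ++ l2) -> normalized l1.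
Proof. by move/cat_sorted2=> []. Qed.
Lemma nz_catr l1 l2 : normalized (l1 ++ l2) -> normalized l2.
Proof. by move/cat_sorted2=> []. Qed.

Lemma norm_head x l : exists t, normalize (x :: l) = x :: t.
Proof.
rewrite /=; case: (normalize l) => [|y t]; first by exists [::].
case: eqP => [->|_]; by eexists.
Qed.

Lemma norm_id l : normalized l -> normalize l = l.
Proof.
elim: l => [|x l IH] //= H.
rewrite IH; last by move: H; case: l {IH} => //= y l /andP[].
case: l H {IH} => //= y l /andP[/negbTE -> _] //.
Qed.

Lemma norm_dup l1 x l2 : normalize (l1 ++ x :: x :: l2) = normalize (l1 ++ x :: l2).
Proof.
elim: l1 => [|y l1 IH]; last by rewrite /= IH.
case: (norm_head x l2) => t Ht.
transitivity (let t' := normalize (x :: l2) in match t' with y :: _ => if x == y then t' else x :: t' | [::] => [:: x] end); first by [].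
by cbv zeta; rewrite Ht eqxx.
Qed.

Lemma norm_nz l : normalized (normalize l).
Proof.
elim: l => [|x l IH] //=.
case E: (normalize l) => [|y t] //.
case: eqP => [_|/eqP ne]; first by rewrite -E.
by rewrite nz_cons2 ne -E.
Qed.

Lemma mem_norm z l : (z \in normalize l) = (z \in l).
Proof.
elim: l z => [|x l IH] z //=.
case E: (normalize l) => [|y t].
  by move: (IH z); rewrite E in_nil !inE => <-; rewrite orbF.
case: eqP => [ey|_]; last by rewrite in_cons -E (IH z).
have yl : y \in l by rewrite -IH E inE eqxx.
by rewrite -E (IH z) in_cons; case: eqP => // ->; rewrite ey yl.
Qed.

Lemma norm_map (f : nat -> nat) l :
  (forall x y, x \in l -> y \in l -> f x = f y -> x = y) ->
  normalize (map f l) = map f (normalize l).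
Proof.
elim: l => [|x l IH] //= Hinj.
rewrite IH; last by move=> a b Ha Hb; apply: Hinj; rewrite inE ?Ha ?Hb orbT.
case E: (normalize l) => [|y t] //=.
have yl : y \in l by rewrite -mem_norm E inE eqxx.
case: eqP => [/Hinj ->|ne]; rewrite ?inE ?eqxx ?yl ?orbT //.
by case: eqP => //= exy; case: ne; rewrite exy.
Qed.


Lemma FR a w r : normalized (a :: w ++ a :: r) ->
  flip (size w).+1 (a :: w ++ a :: r) = rev w ++ a :: r.
Proof.
move=> H.
rewrite /flip (take_size_cat _ (s1 := a :: w)) // (drop_size_cat _ (s1 := a :: w)) //.
rewrite rev_cons -cats1 -catA /= norm_dup norm_id //.
have := H; rewrite -cat_cons nz_cat => /andP[H1 H2].
rewrite nz_cat H2 andbT -rev_cons nz_rev.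
by move: H1; rewrite -cats1 => /nz_catl.
Qed.

Lemma FL s i : normalized s -> 1 <= i <= size s ->
  size (flip i s) = size s \/
  exists a w r, s = a :: w ++ a :: r /\ i = (size w).+1.
Proof.
case: s => [|a s'] //; move=> Hn; case: i => [|j] // /andP[_ Hj].
have Hs : s' = take j s' ++ drop j s' by rewrite cat_take_drop.
have Hsz : size (take j s') = j by rewrite size_takel.
rewrite /flip [take _ _]/= [drop _ _]/=.
case Ed: (drop j s') Hs => [|q r] Hs.
  left. rewrite cats0 norm_id; first by rewrite size_rev /= {2}Hs cats0.
  by rewrite nz_rev; move: Hn; rewrite {1}Hs cats0.
case: (eqVneq q a) => [eqa|neq].
  right; exists a, (take j s'), r; split; first by rewrite {1}Hs -eqa.
  by rewrite Hsz.
left; rewrite norm_id.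
  by rewrite {2}Hs size_cat size_rev /= size_cat.
rewrite rev_cons -cats1 -catA /= nz_cat nz_cons2 eq_sym neq /=.
apply/andP; split.
  by rewrite -rev_cons nz_rev; move: Hn; rewrite {1}Hs -cat_cons => /nz_catl.
by move: Hn; rewrite {1}Hs -cat_cons => /nz_catr.
Qed.

Lemma flip_size s i : normalized s -> 1 <= i <= size s -> size s <= (size (flip i s)).+1.
Proof.
move=> Hn Hi; case: (FL Hn Hi) => [->//|[a [w [r [Es Ei]]]]].
rewrite Ei Es FR -?Es // Es /= !size_cat /= size_rev; lia.
Qed.

Lemma mem_flip z i s : (z \in flip i s) = (z \in s).
Proof. by rewrite /flip mem_norm mem_cat mem_rev -mem_cat cat_take_drop. Qed.

Lemma nz_flip i s : normalized (flip i s).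
Proof. exact: norm_nz. Qed.

Lemma reach_G m s t : normalized s -> reach m s t -> size s <= size t + m.
Proof.
elim: m s => [|m IH] s Hn /=; first by move=> ->; rewrite addn0.
case=> i [Hi Hr].
have := IH _ (nz_flip i s) Hr; have := flip_size Hn Hi; lia.
Qed.


Definition Tq (u : seq nat) : seq nat := flatten (map (fun x => [:: x; 2]) u).

Lemma T_cons x u : Tq (x :: u) = [:: x, 2 & Tq u]. Proof. by []. Qed.
Lemma T_cat u1 u2 : Tq (u1 ++ u2) = Tq u1 ++ Tq u2.
Proof. by rewrite /Tq map_cat flatten_cat. Qed.

Lemma RT u : flatten (map (fun x => [:: 2; x]) u) ++ [:: 2] = 2 :: Tq u.
Proof. by elim: u => [|x u IH] //=; rewrite IH. Qed.

Lemma size_T u : size (Tq u) = (size u).*2.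
Proof. by elim: u => [|x u IH] //=; rewrite IH doubleS. Qed.

Lemma mem_T z u : z \in Tq u -> (z == 2) || (z \in u).
Proof.
elim: u => [|x u IH] //=; rewrite !inE; case/or3P => [->|->|/IH]; rewrite ?orbT //.
by case/orP=> ->; rewrite ?orbT.
Qed.

Lemma revT u : rev (Tq u) ++ [:: 2] = 2 :: Tq (rev u).
Proof.
elim: u => [|x u IH] //.
rewrite T_cons rev_cons rev_cons -!cats1 -!catA /=.
by rewrite -[[:: 2; x; 2]]/([:: 2] ++ [:: x; 2]) catA IH rev_cons -cats1 T_cat.
Qed.

Lemma rep_S w m : rep w m.+1 = w ++ rep w m. Proof. by []. Qed.
Lemma mem_rep z w m : z \in rep w m -> z \in w.
Proof. by elim: m => [|m IH] //; rewrite rep_S mem_cat => /orP[//|/IH]. Qed.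
Lemma size_rep w m : size (rep w m) = size w * m.
Proof. by elim: m => [|m IH]; rewrite ?muln0 // rep_S size_cat IH mulnS. Qed.
Lemma rep_rcons w m : rep w m ++ w = w ++ rep w m.
Proof. by elim: m => [|m IH]; rewrite ?cats0 // rep_S -catA IH. Qed.
Lemma rev_rep x y m : rev (rep [:: x; y] m) = rep [:: y; x] m.
Proof.
elim: m => [|m IH] //; rewrite rep_S rev_cat IH.
by rewrite rep_S -rep_rcons.
Qed.
Lemma rep_T y m : rep [:: y; 2] m = Tq (nseq m y).
Proof. by elim: m => [|m IH] //; rewrite rep_S IH. Qed.

Fixpoint alt (a b : nat) n : seq nat := if n is n'.+1 then a :: alt b a n' else [::].
Lemma rep_alt x y m : rep [:: x; y] m = alt x y m.*2.
Proof. by elim: m => [|m IH] //; rewrite rep_S IH doubleS. Qed.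
Lemma rep_alt1 x y m : rep [:: x; y] m ++ [:: x] = alt x y (m.*2).+1.
Proof. by elim: m => [|m IH] //; rewrite rep_S -catA IH doubleS. Qed.
Lemma map_alt (f : nat -> nat) a b n : map f (alt a b n) = alt (f a) (f b) n.
Proof. by elim: n a b => [|n IH] a b //=; rewrite IH. Qed.

Lemma SPa a u w r : a != 2 -> Tq u = w ++ a :: r ->
  exists u1 u2, u = u1 ++ a :: u2 /\ w = Tq u1 /\ r = 2 :: Tq u2.
Proof.
move=> a2; elim: u w => [|x u IH] [|y [|z w]] //; rewrite T_cons /=.
- by case=> -> <-; exists [::], u.
- by case=> _ e; rewrite e eqxx in a2.
case=> -> <- /IH [u1 [u2 [-> [-> ->]]]].
by exists (y :: u1), u2.
Qed.

Lemma SPb u w r : 2 \notin u -> Tq u = w ++ 2 :: r ->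
  exists u1 u2, u1 != [::] /\ u = u1 ++ u2 /\ w ++ [:: 2] = Tq u1 /\ r = Tq u2.
Proof.
elim: u w => [|x u IH] [|y [|z w]] //; rewrite T_cons /= ?inE.
- by move=> H [e]; rewrite e eqxx in H.
- by move=> _ [-> <-]; exists [:: y], u.
move=> /norP[_ Hu] [-> <- /(IH _ Hu) [u1 [u2 [_ [-> [e ->]]]]]].
by exists (y :: u1), u2; rewrite /= e.
Qed.

Lemma UNQ (a : nat) l1 r1 l2 r2 : a \notin l2 -> a \notin r2 ->
  l1 ++ a :: r1 = l2 ++ a :: r2 -> l1 = l2 /\ r1 = r2.
Proof.
elim: l1 l2 => [|x l1 IH] [|y l2] //=.
- by move=> _ _ [->].
- by move=> H _ [e _]; rewrite inE e eqxx in H.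
- by move=> _ H [e e']; rewrite -e' mem_cat inE eqxx orbT in H.
rewrite inE => /norP[_ H1] H2 [-> /(IH _ H1 H2) [-> ->]] //.
Qed.


Definition Bc t := badI t \/ badII t \/ badIII t \/ badIV t.
Definition f3 (a b c : nat) := fun x => nth 0 [:: a; b; c] x.

Definition IVl : seq (seq nat) := [:: [:: 2;1;0;2;1;2]; [:: 0;2;1;0;1;2]; [:: 0;1;2;0;2;1;2];
            [:: 1;2;0;1;2;1;2]; [:: 0;2;1;0;1;2;1;2]; [:: 2;0;2;1;0;2;1;2];
            [:: 0;2;0;2;1;0;2;1;2]; [:: 1;2;0;1;2;0;2;1;2]].

Lemma IV_all (P : pred (seq nat)) t : all P IVl -> badIV t -> P t.
Proof. by move/allP; apply. Qed.

Lemma all_rep (P : pred nat) w m : all P w -> all P (rep w m).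
Proof. by move=> H; elim: m => [|m IH] //; rewrite rep_S all_cat H. Qed.
Lemma all_T (P : pred nat) u : all P u -> P 2 -> all P (Tq u).
Proof. by move=> H H2; elim: u H => [|x u IH] //= /andP[-> /IH ->]; rewrite H2. Qed.

Lemma Bc_all t : Bc t -> all (fun x => x < 3) t.
Proof.
case=> [[[m [_ ->]]|[m [_ ->]]]|[[[u [_ [Hu ->]]]|[u [_ [Hu ->]]]]|[[m [p [_ ->]]]|H4]]].
- by rewrite /= all_rep.
- by rewrite /= all_rep.
- apply: all_T => //; apply: sub_all Hu => x /= h; lia.
- rewrite RT /= all_T //; apply: sub_all Hu => x /= h; lia.
- by rewrite /= all_cat /= !all_rep.
- by apply: (IV_all (P := fun t => all (fun x => x < 3) t)) H4.
Qed.

Lemma Bc_lt3 t : Bc t -> forall x, x \in t -> x < 3.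
Proof. by move/Bc_all/allP. Qed.

Lemma perm_props a b c : perm_eq [:: a; b; c] [:: 0; 1; 2] ->
  [/\ a < 3, b < 3, c < 3 & uniq [:: a; b; c]].
Proof.
move=> P; have U := perm_uniq P; have M := perm_mem P.
have lt z : z \in [:: a; b; c] -> z < 3.
  by rewrite M !inE => /or3P[]/eqP->.
by split; rewrite ?U //; apply: lt; rewrite !inE eqxx ?orbT.
Qed.

Lemma f3_inj a b c x y : perm_eq [:: a; b; c] [:: 0; 1; 2] -> x < 3 -> y < 3 ->
  f3 a b c x = f3 a b c y -> x = y.
Proof.
case/perm_props=> _ _ _ /=; rewrite !inE !negb_or => /andP[/andP[ab ac] /andP[bc _]].
case: x => [|[|[|x]]] //; case: y => [|[|[|y]]] // _ _; rewrite /f3 /= => e;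
  by move: ab ac bc; rewrite e eqxx ?andbF.
Qed.

Lemma f3_lt a b c x : perm_eq [:: a; b; c] [:: 0; 1; 2] -> x < 3 -> f3 a b c x < 3.
Proof. by case/perm_props=> ha hb hc _; case: x => [|[|[|x]]]. Qed.

Lemma map_id3 t : all (fun x => x < 3) t -> map (f3 0 1 2) t = t.
Proof. by elim: t => [|x t IH] //= /andP[hx /IH ->]; case: x hx => [|[|[|x]]]. Qed.

Lemma bad_id t : Bc t -> bad t.
Proof. by move=> H; exists 0, 1, 2, t; split=> //; rewrite map_id3 //; apply: Bc_all. Qed.

Lemma bad_map a b c u : perm_eq [:: a; b; c] [:: 0; 1; 2] -> bad u ->
  bad (map (f3 a b c) u).
Proof.
move=> P [a2 [b2 [c2 [t [P2 [Bt ->]]]]]].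
exists (f3 a b c a2), (f3 a b c b2), (f3 a b c c2), t; split=> //.
  have -> : [:: f3 a b c a2; f3 a b c b2; f3 a b c c2] = map (f3 a b c) [:: a2; b2; c2] by [].
  apply: perm_trans (perm_map _ P2) _; exact: P.
rewrite -map_comp; split=> //; apply/eq_in_map => x /(Bc_lt3 Bt) hx /=.
by case: x hx => [|[|[|x]]].
Qed.

Lemma Bc_size3 t : Bc t -> size t = 3 -> ~~ uniq t.
Proof.
case=> [[[m [hm ->]]|[m [hm ->]]]|[[[u [_ [Hu ->]]]|[u [_ [Hu ->]]]]|[[m [p [hm ->]]]|H4]]].
- by rewrite /= size_rep /=; lia.
- by rewrite /= size_rep /=; lia.
- by rewrite -/(Tq u) size_T; lia.
- rewrite RT /= size_T; case: u Hu => [|x [|y u]] //= _ _.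
  by rewrite !inE eqxx orbT.
- by rewrite /= size_cat /= !size_rep /=; lia.
- by move=> h; move: (IV_all (P := fun t => (size t == 3) ==> ~~ uniq t) isT H4); rewrite h.
Qed.

Lemma bad_size s : bad s -> fully 3 s -> 4 <= size s.
Proof.
move=> [a [b [c [t [P [Bt ->]]]]]] F.
have sub : {subset [:: 0; 1; 2] <= map (f3 a b c) t} by move=> x; rewrite F !inE => /or3P[]/eqP->.
have := uniq_leq_size (isT : uniq [:: 0; 1; 2]) sub; rewrite leq_eqVlt => /orP[/eqP e|//].
have := leq_size_uniq (isT : uniq [:: 0; 1; 2]) sub; rewrite -e leqnn => /(_ isT) /map_uniq U.
by have := Bc_size3 Bt; rewrite -(size_map (f3 a b c)) -e U => /(_ erefl).
Qed.

Lemma flip_map (f : nat -> nat) i t :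
  (forall x y, x \in t -> y \in t -> f x = f y -> x = y) ->
  flip i (map f t) = map f (flip i t).
Proof.
move=> H; rewrite /flip -map_take -map_drop -map_rev -map_cat norm_map //.
have Hm z : z \in rev (take i t) ++ drop i t -> z \in t by rewrite mem_cat mem_rev -mem_cat cat_take_drop.
by move=> x y /Hm hx /Hm hy; apply: H.
Qed.

Lemma canon s : bad s -> exists a b c t, [/\ perm_eq [:: a; b; c] [:: 0; 1; 2], Bc t,
  s = map (f3 a b c) t & forall i, flip i s = map (f3 a b c) (flip i t)].
Proof.
move=> [a [b [c [t [P [Bt ->]]]]]]; exists a, b, c, t; split=> // i.
apply: flip_map => x y hx hy; apply: f3_inj P _ _; exact: Bc_lt3 Bt _ _.
Qed.

Lemma canon_nz a b c t : perm_eq [:: a; b; c] [:: 0; 1; 2] -> Bc t ->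
  normalized (map (f3 a b c) t) -> normalized t.
Proof.
move=> P Bt; rewrite /normalized sorted_map; apply: sub_sorted => x y /=.
by apply: contra => /eqP ->.
Qed.

Lemma canon_fully a b c t : perm_eq [:: a; b; c] [:: 0; 1; 2] -> Bc t ->
  fully 3 (map (f3 a b c) t) -> fully 3 t.
Proof.
move=> P Bt F x; apply/idP/idP; first exact: Bc_lt3.
move=> hx; have := f3_lt P hx; rewrite -F => /mapP [y hy e].
by rewrite (f3_inj P hx (Bc_lt3 Bt hy) e).
Qed.



Lemma bIa m : 2 <= m -> bad (0 :: rep [:: 1; 2] m).
Proof. by move=> h; apply: bad_id; left; left; exists m. Qed.
Lemma bIb m : 1 <= m -> bad ([:: 0; 2] ++ rep [:: 1; 2] m).
Proof. by move=> h; apply: bad_id; left; right; exists m. Qed.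
Lemma bIIa u : u != [::] -> all (fun x => x < 2) u -> bad (Tq u).
Proof. by move=> h1 h2; apply: bad_id; right; left; left; exists u. Qed.
Lemma bIIb u : u != [::] -> all (fun x => x < 2) u -> bad (2 :: Tq u).
Proof. by move=> h1 h2; apply: bad_id; right; left; right; exists u; rewrite RT. Qed.
Lemma bIII m p : 1 <= m -> bad (0 :: rep [:: 2; 1] m ++ [:: 0; 2] ++ rep [:: 1; 2] p).
Proof. by move=> h; apply: bad_id; right; right; left; exists m, p. Qed.
Lemma bIV t : badIV t -> bad t.
Proof. by move=> h; apply: bad_id; right; right; right. Qed.
Lemma bswap v : all (fun x => x < 3) v -> bad (map (f3 1 0 2) v) -> bad v.
Proof.
move=> h /(bad_map (a:=1) (b:=0) (c:=2) isT); rewrite -map_comp.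
suff -> : map (f3 1 0 2 \o f3 1 0 2) v = v by [].
by elim: v h => [|x v IH] //= /andP[hx /IH ->]; case: x hx => [|[|[|x]]].
Qed.

Lemma CL_IV t i : badIV t -> 1 <= i <= size t -> size (flip i t) < size t -> bad (flip i t).
Proof.
rewrite /badIV !inE => H.
repeat case/orP: H => [/eqP -> | H]; last move/eqP: H => ->;
case: i => [|[|[|[|[|[|[|[|[|[|i]]]]]]]]]] // _; rewrite /flip /= => // _.
- exact: (@bIa 2).
- by apply: bswap => //; apply: (@bIII 1 0).
- by apply: bswap => //; apply: (@bIII 1 0).
- exact: bIV.
- exact: (@bIb 2).
- exact: bIV.
- exact: bIV.
- exact: (@bIII 1 1).
- exact: bIV.
- by apply: bswap => //; apply: (@bIII 1 1).
- exact: bIV.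
- exact: (@bIIa [:: 1; 0; 0; 1]).
- exact: (@bIIa [:: 0; 1; 0; 1]).
- exact: bIV.
Qed.

Lemma allrev (P : pred nat) u : all P (rev u) = all P u.
Proof. by rewrite all_rev. Qed.

Lemma CL_c t i : Bc t -> normalized t -> 1 <= i <= size t -> size (flip i t) < size t ->
  bad (flip i t).
Proof.
move=> Bt Hn Hi Hs.
case: Bt => [BI|[BII|[BIII|BIV]]]; last exact: CL_IV.
all: case: (FL Hn Hi) => [e|[a [w [r [Et Ei]]]]]; first by rewrite e ltnn in Hs.
all: rewrite Ei Et FR -?Et //; clear Hs Hi Ei.
- case: BI => [[m [hm Em]]|[m [hm Em]]]; rewrite Em in Et; case: Et => ea Er.
  + have : a \in rep [:: 1; 2] m by rewrite Er mem_cat inE eqxx orbT.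
    by move/mem_rep; rewrite -ea.
  + have : a \in 2 :: rep [:: 1; 2] m by rewrite Er mem_cat inE eqxx orbT.
    by rewrite inE => /orP[|/mem_rep]; rewrite -ea.
- case: BII => [[u [hu [Hu Eu]]]|[u [hu [Hu Eu]]]]; rewrite Eu -?/(Tq u) ?RT in Et.
  + case: u hu Hu Eu Et => [|x u] // _ /andP[hx Hu] _; rewrite T_cons; case=> ea.
    rewrite -ea in hx *.
    case: w => [|y w'] /=; first by case=> e; rewrite -e in hx.
    case=> e2 /(SPa _) [].
      by apply/eqP => e; rewrite e in hx.
    move=> u1 [u2 [Eu [-> ->]]]; rewrite -e2.
    rewrite rev_cons -cats1 revT cat_cons -T_cons -T_cat.
    apply: bIIb; first by case: (rev u1).
    change (is_true (all (fun x => x < 2) u)) in Hu.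
    by move: Hu; rewrite Eu !all_cat allrev /= hx.
  + case: Et => ea; rewrite -ea => /SPb [].
      by apply/negP => /(allP Hu).
    move=> u1 [u2 [hu1 [Eu2 [Ew ->]]]].
    have Ew' : rev w ++ [:: 2] = Tq (rev u1).
      by have := revT u1; rewrite -Ew rev_cat /= => [[]].
    rewrite -cat1s catA Ew' -T_cat; apply: bIIa.
      by move: hu1; rewrite -!size_eq0 size_cat size_rev; lia.
    by move: Hu; rewrite Eu2 !all_cat allrev.
- case: BIII => [m [p [hm Em]]]; rewrite Em in Et; case: Et => ea.
  rewrite -ea => /esym/UNQ []; rewrite ?inE.
  + by apply/negP => /mem_rep; rewrite !inE.
  + by apply/negP => /mem_rep; rewrite !inE.
  move=> -> ->; rewrite rev_rep !rep_T -T_cons -T_cat.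
  apply: bIIa; first by rewrite -size_eq0 size_cat /= addnS.
  by rewrite all_cat /= !all_nseq !orbT.
Qed.



Lemma CL_s s i : bad s -> normalized s -> 1 <= i <= size s -> size (flip i s) < size s ->
  bad (flip i s).
Proof.
move=> /canon [a [b [c [t [P Bt Es Hf]]]]] Hn Hi Hs.
have Hnt : normalized t by apply: canon_nz P Bt _; rewrite -Es.
rewrite Hf in Hs *; rewrite Es size_map in Hi Hs; rewrite size_map in Hs.
by apply: bad_map P _; apply: CL_c.
Qed.

Lemma fully_flip i s : fully 3 s -> fully 3 (flip i s).
Proof. by move=> F x; rewrite mem_flip F. Qed.

Lemma LB m s t : normalized s -> fully 3 s -> bad s -> reach m s t -> size t = 3 ->
  size s - 2 <= m.
Proof.
elim: m s => [|m IH] s Hn F B /=.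
  by move=> Est e; have := bad_size B F; rewrite Est e.
case=> i [Hi Hr] e.
have Hfs := flip_size Hn Hi.
case: (ltnP (size (flip i s)) (size s)) => h.
  have := IH _ (nz_flip i s) (fully_flip i F) (CL_s B Hn Hi h) Hr e; lia.
have := reach_G (nz_flip i s) Hr; rewrite e; lia.
Qed.

Lemma size_alt a b n : size (alt a b n) = n.
Proof. by elim: n a b => [|n IH] a b //=; rewrite IH. Qed.

Lemma nz_alt a b c n : a != b -> c != a -> c != b -> normalized (alt a b n ++ [:: c]).
Proof.
elim: n a b => [|n IH] a b ab ca cb //.
case: n IH => [|n] IH; first by rewrite /normalized /= eq_sym ca.
have -> : alt a b n.+2 ++ [:: c] = a :: (alt b a n.+1 ++ [:: c]) by [].
have -> : alt b a n.+1 ++ [:: c] = b :: (alt a b n ++ [:: c]) by [].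
by rewrite nz_cons2 ab -[b :: _]/(alt b a n.+1 ++ [:: c]) (IH b a) // eq_sym.
Qed.

Lemma Dl L a b c : a != b -> c != a -> c != b ->
  exists t, reach L (alt a b L.+2 ++ [:: c]) t /\ size t = 3.
Proof.
elim: L a b => [|L IH] a b ab ca cb; first by exists [:: a; b; c].
have ba : b != a by rewrite eq_sym.
have [t [Hr Ht]] := IH b a ba cb ca.
exists t; split=> //; exists 2; split; first by rewrite size_cat size_alt.
have H := nz_alt (L.+3) ab ca cb.
have -> : alt a b L.+3 ++ [:: c] = a :: [:: b] ++ a :: (alt b a L ++ [:: c]) by [].
rewrite (FR (w := [:: b])) //.
Qed.

Lemma Droute s a b c L : normalized s -> 4 <= size s -> rev s = alt a b L ++ [:: c] ->
  a != b -> c != a -> c != b -> exists t, reach (size s - 2) s t /\ size t = 3.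
Proof.
move=> Hn Hs Er ab ca cb.
have HL : size s = L.+1 by rewrite -size_rev Er size_cat size_alt addn1.
have -> : size s - 2 = (L - 2).+1 by lia.
have [t [Hr Ht]] := Dl (L - 2) ab ca cb.
exists t; split=> //; exists (size s); split; first by rewrite leqnn andbT; lia.
rewrite /flip take_size drop_size cats0 norm_id ?nz_rev // Er.
by move: Hr; have -> : (L - 2).+2 = L by lia.
Qed.

Definition UBP s := exists t, reach (size s - 2) s t /\ size t = 3.

Lemma step s x w r :
  (forall s', size s' < size s -> normalized s' -> fully 3 s' -> bad s' -> UBP s') ->
  normalized s -> fully 3 s -> bad s -> s = x :: w ++ x :: r -> UBP s.
Proof.
move=> IH Hn F B Es.
have Hi : 1 <= (size w).+1 <= size s by rewrite Es /= size_cat /=; lia.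
have Hf : flip (size w).+1 s = rev w ++ x :: r by rewrite Es FR // -Es.
have Hsz : size (flip (size w).+1 s) = (size s).-1 by rewrite Hf Es /= !size_cat size_rev.
have B4 := bad_size B F.
have Hlt : size (flip (size w).+1 s) < size s by rewrite Hsz; lia.
have [t [Hr Ht]] := IH _ Hlt (nz_flip _ _) (fully_flip _ F) (CL_s B Hn Hi Hlt).
exists t; split=> //.
have -> : size s - 2 = (size (flip (size w).+1 s) - 2).+1.
  have := bad_size (CL_s B Hn Hi Hlt) (fully_flip _ F); rewrite Hsz; lia.
by exists (size w).+1.
Qed.

Lemma UB n s : size s <= n -> normalized s -> fully 3 s -> bad s -> UBP s.
Proof.
elim: n s => [|n IHn] s Hs Hn F B.
  by have := bad_size B F; lia.
have IH : forall s', size s' < size s -> normalized s' -> fully 3 s' -> bad s' -> UBP s'.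
  by move=> s' h; apply: IHn; lia.
have [a [b [c [t [P Bt Es _]]]]] := canon B.
have Ft : fully 3 t by apply: canon_fully P Bt _; rewrite -Es.
have st : forall x w r, t = x :: w ++ x :: r -> UBP s.
  move=> x w r Et; apply: (step (x := f3 a b c x) (w := map (f3 a b c) w)
    (r := map (f3 a b c) r) IH Hn F B).
  by rewrite Es Et /= map_cat.
have dr : forall x y z L, rev t = alt x y L ++ [:: z] -> x < 3 -> y < 3 -> z < 3 ->
    x != y -> z != x -> z != y -> UBP s.
  move=> x y z L Er hx hy hz xy zx zy.
  apply: (Droute (a := f3 a b c x) (b := f3 a b c y) (c := f3 a b c z) (L := L) Hn).
  - exact: bad_size B F.
  - by rewrite Es -map_rev Er map_cat map_alt.
  - by apply: contra xy => /eqP/(f3_inj P hx hy)/eqP.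
  - by apply: contra zx => /eqP/(f3_inj P hz hx)/eqP.
  - by apply: contra zy => /eqP/(f3_inj P hz hy)/eqP.
case: Bt => [[[m [hm Et]]|[m [hm Et]]]|[[[u [hu [Hu Et]]]|[u [hu [Hu Et]]]]|[[m [p [hm Et]]]|H4]]].
- apply: (dr 2 1 0 m.*2) => //.
  by rewrite Et rev_cons -cats1 rev_rep rep_alt.
- apply: (dr 2 1 0 (m.*2).+1) => //.
  by rewrite Et rev_cat rev_rep -rep_alt1 -catA.
- rewrite -/(Tq u) in Et.
  case: u hu Hu Et => [|x u'] // _ /andP[hx Hu] Et.
  change (is_true (all (fun x => x < 2) u')) in Hu.
  case: (boolP (x \in u')) => xu.
    case/splitPr: xu Hu Et => u1 u2 _ Et.
    by apply: (st x (2 :: Tq u1) (2 :: Tq u2)); rewrite Et T_cons T_cat T_cons.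
  set y := 1 - x.
  have Hy : all (pred1 y) u'.
    apply/allP => z hz /=; have := allP Hu z hz; have : z != x by apply: contraNneq xu => <-.
    rewrite /y; lia.
  move/all_pred1P: Hy => Eu.
  have hy : y < 3 by rewrite /y; lia.
  have yt : y \in t by rewrite Ft.
  case Ek: (size u') Eu => [|k] Eu.
    by move: yt; rewrite Et Eu /= !inE /y; lia.
  apply: (dr 2 y x (k.+1).*2.+1) => //; try (rewrite /y; lia).
  rewrite Et T_cons Eu -rep_T.
  have -> : [:: x, 2 & rep [:: y; 2] k.+1] = [:: x; 2] ++ rep [:: y; 2] k.+1 by [].
  by rewrite rev_cat rev_rep -[rev [:: x; 2]]/([:: 2] ++ [:: x]) catA rep_alt1.
- case: u hu Hu Et => [|x u'] // _ _ Et.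
  by apply: (st 2 [:: x] (Tq u')); rewrite Et -/(Tq _) RT.
- by apply: (st 0 (rep [:: 2; 1] m) (2 :: rep [:: 1; 2] p)); rewrite Et.
- move: H4; rewrite /badIV !inE.
  repeat case/orP => [/eqP Et|]; last move/eqP => Et.
  + by apply: (st 2 [:: 1; 0] [:: 1; 2]); rewrite Et.
  + by apply: (st 0 [:: 2; 1] [:: 1; 2]); rewrite Et.
  + by apply: (st 0 [:: 1; 2] [:: 2; 1; 2]); rewrite Et.
  + by apply: (st 1 [:: 2; 0] [:: 2; 1; 2]); rewrite Et.
  + by apply: (st 0 [:: 2; 1] [:: 1; 2; 1; 2]); rewrite Et.
  + by apply: (st 2 [:: 0] [:: 1; 0; 2; 1; 2]); rewrite Et.
  + by apply: (st 0 [:: 2] [:: 2; 1; 0; 2; 1; 2]); rewrite Et.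
  + by apply: (st 1 [:: 2; 0] [:: 2; 0; 2; 1; 2]); rewrite Et.
Qed.

Theorem lemma3p4 (s : seq nat) :
  normalized s -> fully 3 s -> bad s -> grouping_distance 3 s (size s - 2).
Proof.
move=> Hn F B; split; first exact: (UB (leqnn _) Hn F B).
by move=> m t Hr Ht; apply: (LB Hn F B Hr Ht).
Qed.
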